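(* Let $(J,\mu)$ be a standard Borel space with a Borel measure $\mu$, and let $\mathcal{I}$ be a family of Borel subsets of $J$ satisfying (I1) if $I_1\subseteq I_2\subseteq\cdots$ with $I_n\in\mathcal{I}$ for all $n\in\mathbb{Z}_+$, then $\bigcup_n I_n\in\mathcal{I}$. Then $\mathcal{I}$ satisfies (I2) for all $I_1,I_2\in\mathcal{I}$ with $\mu(I_1)<\mu(I_2)$ there exists $I_3\in\mathcal{I}$ with $I_1\subseteq I_3\subseteq I_1\cup I_2$ and $\mu(I_3)>\mu(I_1)$ if and only if it satisfies (I2') for all $I_1,I_2\in\mathcal{I}$ there exists $I_3\in\mathcal{I}$ with $I_1\subseteq I_3\subseteq I_1\cup I_2$ and $\mu(I_3)\ge\mu(I_2)$. *)

(* Defs.v *)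
From HB Require Import structures.
From mathcomp Require Import all_boot all_order all_algebra.
From mathcomp Require Import all_classical all_reals all_analysis.
Set Implicit Arguments. Unset Strict Implicit. Unset Printing Implicit Defensive.
Import Order.TTheory GRing.Theory Num.Theory.
Local Open Scope classical_set_scope.
Local Open Scope ring_scope.

Definition is_metric (R : realType) (T : Type) (dist : T -> T -> R) : Prop :=
  [/\ forall x y, 0 <= dist x y,
      forall x y, dist x y = 0 <-> x = y,
      forall x y, dist x y = dist y x &
      forall x y z, dist x z <= dist x y + dist y z].

Definition dist_open (R : realType) (T : Type) (dist : T -> T -> R)
  (A : set T) : Prop :=
  forall x, A x -> exists2 e : R, 0 < e & forall y, dist x y < e -> A y.

Definition dist_complete (R : realType) (T : Type) (dist : T -> T -> R) : Prop :=
  forall u : nat -> T,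
    (forall e : R, 0 < e -> exists N, forall m n, (N <= m)%N -> (N <= n)%N ->
        dist (u m) (u n) < e) ->
    exists l, forall e : R, 0 < e -> exists N, forall n, (N <= n)%N ->
        dist (u n) l < e.

(* separability: there is a countable dense subset (given as a sequence;
   T is assumed nonempty in that case -- the empty space is handled separately) *)
Definition dist_separable (R : realType) (T : Type) (dist : T -> T -> R) : Prop :=
  (forall x : T, False) \/
  exists s : nat -> T, forall x (e : R), 0 < e -> exists n, dist x (s n) < e.

Definition polish_metric (R : realType) (T : Type) (dist : T -> T -> R) : Prop :=
  [/\ is_metric dist, dist_complete dist & dist_separable dist].

Definition standard_Borel (d : measure_display) (T : measurableType d) : Prop :=
  exists (R : realType) (dist : T -> T -> R),
    polish_metric dist /\ (@measurable d T = <<s dist_open dist >>).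

(* Main.v *)
Require Import Defs.
From HB Require Import structures.
From mathcomp Require Import all_boot all_order all_algebra.
From mathcomp Require Import all_classical all_reals all_analysis.
From mathcomp Require Import lra.
Import Order.TTheory GRing.Theory Num.Theory.
Local Open Scope classical_set_scope.
Local Open Scope ereal_scope.

Section Aux.
Variable R : realType.

Definition bnd (s : \bar R) (n : nat) : \bar R :=
  Order.min (s - ((n.+1%:R)^-1)%:E) (n%:R)%:E.

Lemma bnd_lt (s : \bar R) n : 0 <= s -> bnd s n < s.
Proof.
case: s => [r| |] // r0; rewrite /bnd.
- rewrite gt_min; apply/orP; left.
  rewrite -EFinB lte_fin; rewrite ltrBlDr ltrDl invr_gt0; exact: ltr0Sn.
- by rewrite gt_min ltry orbT.
Qed.

Lemma bnd_le (x s : \bar R) n : x <= s -> bnd x n <= bnd s n.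
Proof. by move=> xs; rewrite /bnd le_min2 // leeB. Qed.

Lemma bnd_contra (x : \bar R) (r : R) : r%:E < x -> (forall n, bnd x n < r%:E) -> False.
Proof.
case: x => [x| |] //.
- rewrite lte_fin => rx H.
  have xr0 : (0 < x - r)%R by rewrite subr_gt0.
  pose K := Num.max r (x - r)^-1%R.
  pose n := Num.truncn K.
  have Kn := truncnS_gt K.
  have h1 : (r < n.+1%:R)%R by apply: le_lt_trans Kn; rewrite le_max lexx.
  have h2 : ((x - r)^-1 < n.+1%:R)%R by apply: le_lt_trans Kn; rewrite le_max lexx orbT.
  move: (H n.+1); rewrite /bnd gt_min => /orP[|]; rewrite -?EFinB lte_fin.
  + have hi : ((x - r) * (x - r)^-1 = 1)%R by rewrite divff // gt_eqF.
    have hj : ((n.+2%:R : R) * (n.+2%:R)^-1 = 1)%R by rewrite divff.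
    have hn : (n.+2%:R = n.+1%:R + 1 :> R)%R by rewrite -natr1.
    have ip : (0 < (n.+2%:R : R)^-1)%R by rewrite invr_gt0.
    have ip2 : (0 < (x - r)^-1)%R by rewrite invr_gt0.
    move=> hlt.
    have e1 : (0 < (x - r) * (n.+1%:R - (x - r)^-1))%R
      by apply: mulr_gt0 => //; rewrite subr_gt0.
    have e2 : (0 < (n.+2%:R : R) * ((n.+2%:R)^-1 - (x - r)))%R.
      apply: mulr_gt0; first exact: ltr0Sn. by rewrite subr_gt0 ltrBlDl addrC -ltrBlDl.
    rewrite mulrBr hi in e1; rewrite mulrBr hj hn mulrDl mul1r [(_ * (x - r))%R]mulrC in e2. lra.
  + move=> hlt; lra.
- move=> _ H; move: (H (Num.truncn r).+1).
  rewrite /bnd gt_min => /orP[|]; first by [].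
  rewrite lte_fin => h; have := truncnS_gt r.
  by move=> h'; have := lt_trans h' h; rewrite ltxx.
Qed.
End Aux.
Arguments bnd {R}.
Arguments bnd_lt {R}.
Arguments bnd_le {R x s}.
Arguments bnd_contra {R}.

Theorem lemma4p10 (d : measure_display) (J : measurableType d) (R : realType)
  (mu : {measure set J -> \bar R}%R) (calI : set (set J)) :
  standard_Borel J ->
  calI `<=` measurable ->
  (* (I1) *)
  (forall F : nat -> set J, (forall n, calI (F n)) ->
     {homo F : n m / (n <= m)%N >-> n `<=` m} ->
     calI (\bigcup_n F n)) ->
  ((* (I2) *)
   (forall I1 I2, calI I1 -> calI I2 -> mu I1 < mu I2 ->
      exists I3, [/\ calI I3, I1 `<=` I3, I3 `<=` I1 `|` I2 & mu I3 > mu I1])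
   <->
   (* (I2') *)
   (forall I1 I2, calI I1 -> calI I2 ->
      exists I3, [/\ calI I3, I1 `<=` I3, I3 `<=` I1 `|` I2 & mu I3 >= mu I2])).
Proof.
move=> _ Imeas I1H; split; last first.
  move=> H I1 I2 c1 c2 lt12; have [I3 [c3 s13 s3 le3]] := H I1 I2 c1 c2.
  by exists I3; split => //; apply: lt_le_trans le3.
move=> H I1 I2 c1 c2.
pose S A := [/\ calI A, I1 `<=` A & A `<=` I1 `|` I2].
pose s A := ereal_sup [set mu B | B in [set B | S B /\ A `<=` B]].
have step : forall p : set J * nat, exists B : set J,
    S p.1 -> [/\ S B, p.1 `<=` B & bnd (s p.1) p.2 < mu B].
  case=> A n /=.
  have [SA|nSA] := pselect (S A); last by exists A.
  have : bnd (s A) n < s A.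
    apply: bnd_lt; apply: le_trans (measure_ge0 mu A) _.
    by apply: ereal_sup_ubound; exists A => //; split.
  move/ereal_sup_gt => [_ [B [SB AB] <-] lt].
  by exists B.
have [f hf] := choice step.
pose F := fix F n := match n with 0 => I1 | k.+1 => f (F k, k) end.
have SF : forall n, S (F n).
  elim=> [|n IH]; first by split => //; apply: subsetUl.
  by have [] := hf (F n, n) IH.
have FS : forall n, F n `<=` F n.+1 by move=> n; have [] := hf (F n, n) (SF n).
have incF : {homo F : n m / (n <= m)%N >-> n `<=` m}.
  move=> n m; elim: m => [|m IH]; first by rewrite leqn0 => /eqP->.
  rewrite leq_eqVlt => /orP[/eqP->//|]; rewrite ltnS => /IH nm.
  exact: subset_trans nm (FS m).
pose Jinf := \bigcup_n F n.
have cJ : calI Jinf by apply: I1H => // n; have [] := SF n.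
have SJ : S Jinf.
  split => //; first by move=> x x1; exists 0%N.
  by move=> x [n _ Fx]; have [_ _] := SF n; apply.
have [le2|lt2] := leP (mu I2) (mu Jinf).
  by exists Jinf; have [] := SJ.
have [I3 [c3 s3 s3' gt3]] := H Jinf I2 cJ c2 lt2.
have SI3 : S I3.
  split => //; first by apply: subset_trans s3; have [] := SJ.
  move=> x /s3' [|]; first by have [_ _] := SJ; apply.
  by right.
have mJfin : mu Jinf \is a fin_num.
  rewrite ge0_fin_numE ?measure_ge0 //; apply: lt_le_trans lt2 _; exact: leey.
have mJE : mu Jinf = (fine (mu Jinf))%:E by rewrite fineK.
apply: False_ind; apply: (@bnd_contra R (mu I3) (fine (mu Jinf))); first by rewrite -mJE.
move=> n; rewrite -mJE.
have le1 : mu I3 <= s (F n).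
  apply: ereal_sup_ubound; exists I3 => //; split => //.
  move=> x Fx; apply: s3; exists n => //.
apply: le_lt_trans (bnd_le n le1) _.
have [_ _ ltn] := hf (F n, n) (SF n).
apply: lt_le_trans ltn _.
apply: le_measure; rewrite ?inE.
- by apply: Imeas; have [] := SF n.+1.
- exact: Imeas.
- by move=> x Fx; exists n.+1.
Qed.
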